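(* Let $A$ be a finite-dimensional real associative $^*$-algebra with unity as described in the context, let $S$ be a genuine imaginary sphere (gis) of $A$ and let $M$ be the real vector subspace of $A$ inducing $S$. Then there exists a norm $\|\cdot\|$ on the real vector space $A$ such that $\|x\|^2=n(x)$ for every $x\in M$.
   Context: $A$ is a real associative algebra with unity $1$, of finite dimension $d>0$, with $\mathbb{R}$ identified with $\mathbb{R}1$, equipped with an anti-involution $x\mapsto x^c$, i.e. a real linear map with $(x^c)^c=x$, $(xy)^c=y^cx^c$ for all $x,y\in A$, and $x^c=x$ for $x\in\mathbb{R}$. The trace is $t(x)=x+x^c$ and the (squared) norm is $n(x)=xx^c$. The quadratic cone is $Q_A=\mathbb{R}\cup\{x\in A : t(x)\in\mathbb{R},\ n(x)\in\mathbb{R},\ 4n(x)>t(x)^2\}$, and $\mathbb{S}_A=\{J\in Q_A: J^2=-1\}$ (assumed nonempty); one has $\mathbb{S}_A=\{J\in A: t(J)=0,\ n(J)=1\}$. For $J\in\mathbb{S}_A$, $\mathbb{C}_J$ is the real subalgebra spanned by $1,J$. A nonempty subset $S\subset A$ is a genuine imaginary sphere (gis) if there is a real vector subspace $M$ with $\mathbb{R}\subset M\subset Q_A$ and $S=M\cap\mathbb{S}_A$; such $M$ is unique (namely $M=\bigcup_{J\in S}\mathbb{C}_J$) and is called the subspace inducing $S$. *)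

(* Defs.v *)
(* The real field R is taken to be an arbitrary real closed
   field (rcfType); this covers the reals and the statement is purely algebraic. *)
From HB Require Import structures.
From mathcomp Require Import all_boot all_order all_algebra all_field.
Set Implicit Arguments. Unset Strict Implicit. Unset Printing Implicit Defensive.
Import Order.TTheory GRing.Theory Num.Theory.
Local Open Scope ring_scope.

Section QuadCone.
Variables (R : rcfType) (A : falgType R) (c : A -> A).

Definition is_real (x : A) : Prop := exists r : R, x = r%:A.

Definition anti_involution : Prop :=
  [/\ linear c, (forall x, c (c x) = x),
      (forall x y, c (x * y) = c y * c x) & (forall r : R, c r%:A = r%:A)].

Definition trace (x : A) : A := x + c x.
Definition nrm (x : A) : A := x * c x.

Definition QA (x : A) : Prop :=
  is_real x \/
  exists a b : R, trace x = a%:A /\ nrm x = b%:A /\ a ^+ 2 < 4 * b.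

Definition SA (J : A) : Prop := QA J /\ J * J = -1.

Definition induces (M : {vspace A}) (S : A -> Prop) : Prop :=
  [/\ (<[1 : A]> <= M)%VS, (forall x, x \in M -> QA x)
    & (forall x, S x <-> (x \in M /\ SA x))].

Definition gis (S : A -> Prop) : Prop :=
  (exists J, S J) /\ exists M : {vspace A}, induces M S.

End QuadCone.

Definition is_norm (R : rcfType) (A : falgType R) (N : A -> R) : Prop :=
  [/\ (forall x, N x = 0 -> x = 0),
      (forall x y, N (x + y) <= N x + N y)
    & (forall (a : R) x, N (a *: x) = `|a| * N x)].

(* Main.v *)
Require Import Defs.
From HB Require Import structures.
From mathcomp Require Import all_boot all_order all_algebra all_field.
From mathcomp Require Import ring lra.
Import Order.TTheory GRing.Theory Num.Theory.
Local Open Scope ring_scope.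

Lemma norm_of_form (R : rcfType) (A : falgType R) (Q : A -> R) (b : A -> A -> R) :
  (forall x, 0 <= Q x) -> (forall x, Q x = 0 -> x = 0) ->
  (forall a x, Q (a *: x) = a ^+ 2 * Q x) ->
  (forall x y, Q (x + y) = Q x + Q y + 2 * b x y) ->
  (forall x y t, b x (t *: y) = t * b x y) ->
  is_norm (fun x => Num.sqrt (Q x)).
Proof.
move=> Q0 Qdef QZ QD bZ.
have CS x y : b x y ^+ 2 <= Q x * Q y.
  have [Qy0|Qy0] := eqVneq (Q y) 0.
    have -> : y = 0 by apply: Qdef.
    have b0 : b x 0 = 0 by rewrite -(scale0r (0 : A)) bZ mul0r.
    by rewrite b0 expr0n /= mulr_ge0.
  have Qyp : 0 < Q y by rewrite lt0r Qy0 Q0.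
  pose t := - b x y / Q y.
  have := Q0 (x + t *: y); rewrite QD QZ bZ => H.
  have ht : t * Q y = - b x y by rewrite /t mulrC mulrCA mulfV // mulr1.
  have H2 : 0 <= (Q x + t ^+ 2 * Q y + 2 * (t * b x y)) * Q y by rewrite mulr_ge0 // ltW.
  have E : (Q x + t ^+ 2 * Q y + 2 * (t * b x y)) * Q y =
     Q x * Q y + (t * Q y) ^+ 2 + 2 * (t * Q y) * b x y by ring.
  move: H2; rewrite E ht => H2. 
  nra.
split.
- by move=> x /eqP; rewrite sqrtr_eq0 => H; apply: Qdef; apply/eqP; rewrite eq_le H Q0.
- move=> x y; rewrite -ler_sqr ?nnegrE ?addr_ge0 ?sqrtr_ge0 //.
  rewrite sqrrD !sqr_sqrtr // QD.
  have s0 : 0 <= Num.sqrt (Q x) * Num.sqrt (Q y) by rewrite mulr_ge0 ?sqrtr_ge0.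
  have s2 : (Num.sqrt (Q x) * Num.sqrt (Q y)) ^+ 2 = Q x * Q y
    by rewrite exprMn !sqr_sqrtr.
  have := CS x y; rewrite -s2 => C.
  have hb : b x y <= Num.sqrt (Q x) * Num.sqrt (Q y) by nra.
  rewrite mulr2n; lra.
- by move=> a x; rewrite QZ sqrtrM ?sqr_ge0 // sqrtr_sqr.
Qed.

Theorem lemma1 (R : rcfType) (A : falgType R) (c : A -> A)
  (Hc : anti_involution c)
  (HSA : exists J : A, SA c J)
  (S : A -> Prop) (HS : gis c S)
  (M : {vspace A}) (HM : induces c M S) :
  exists N : A -> R, is_norm N /\ forall x, x \in M -> (N x ^+ 2)%:A = nrm c x.
Proof.
case: Hc => clin cc cM cR.
case: HM => _ MQ _.
have cD u v : c (u + v) = c u + c v by rewrite -[u in LHS]scale1r clin scale1r.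
have c0 : c 0 = 0 by have := cR 0; rewrite scale0r.
have cZ a u : c (a *: u) = a *: c u by rewrite -[_ *: u]addr0 clin c0 addr0.
pose phi := coord [tuple (1 : A)] ord0.
have phiA r : phi r%:A = r.
  rewrite /phi linearZ /=.
  have := @coord_free _ _ _ [tuple (1 : A)] ord0 ord0.
  rewrite eqxx /= => ->; first by rewrite mulr1.
  by rewrite free_cons /= span_nil memv0 oner_neq0 nil_free.
have nreal x : x \in M ->
   [/\ nrm c x = (phi (nrm c x))%:A, 0 <= phi (nrm c x) & (phi (nrm c x) = 0 -> x = 0)].
  move=> /MQ [[r ->]|[a [b' [_ [-> hab]]]]].
    have E : nrm c r%:A = (r * r)%:A.
      by rewrite /nrm cR -scalerAl mul1r scalerA.
    rewrite E phiA; split => //; first by rewrite -expr2 sqr_ge0.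
    by move/eqP; rewrite mulf_eq0 orbb => /eqP->; rewrite scale0r.
  have bp : 0 < b'.
    by have := sqr_ge0 a; lra.
  rewrite phiA; split => //; [exact: ltW | by move=> b0; rewrite b0 ltxx in bp].
pose p := projv M.
have pD x y : p (x + y) = p x + p y by rewrite /p linearD.
have pZ a x : p (a *: x) = a *: p x by rewrite /p linearZ.
have phiD x y : phi (x + y) = phi x + phi y by rewrite /phi linearD.
have phiZ a x : phi (a *: x) = a * phi x by rewrite /phi linearZ.
pose Q1 x := phi (nrm c (p x)).
pose b1 x y := phi (p x * c (p y) + p y * c (p x)) / 2.
pose w x := x - p x.
have wD x y : w (x + y) = w x + w y.
  by rewrite /w pD opprD addrACA.
have wZ a x : w (a *: x) = a *: w x by rewrite /w pZ scalerBr.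
pose X := vbasis (fullv : {vspace A}).
pose Q2 x := \sum_(i < \dim (fullv : {vspace A})) coord X i (w x) ^+ 2.
pose b2 x y := \sum_(i < \dim (fullv : {vspace A})) coord X i (w x) * coord X i (w y).
have Q1ge x : 0 <= Q1 x by have [] := nreal _ (memv_proj M x).
have Q2ge x : 0 <= Q2 x by apply: sumr_ge0 => i _; apply: sqr_ge0.
have Q1D x y : Q1 (x + y) = Q1 x + Q1 y + 2 * b1 x y.
  rewrite /Q1 /b1 /nrm pD cD mulrDl !mulrDr !phiD.
  rewrite [2 * _]mulrC mulfVK ?pnatr_eq0 //; ring.
have b1Z x y t : b1 x (t *: y) = t * b1 x y.
  rewrite /b1 pZ cZ -scalerAl -scalerAr -scalerDr phiZ.
  by rewrite mulrA.
have Q1Z a x : Q1 (a *: x) = a ^+ 2 * Q1 x.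
  rewrite /Q1 /nrm pZ cZ -scalerAl -scalerAr scalerA phiZ.
  by rewrite expr2.
have Q2D x y : Q2 (x + y) = Q2 x + Q2 y + 2 * b2 x y.
  rewrite /Q2 /b2 wD mulr_sumr -!big_split /=; apply: eq_bigr => i _.
  rewrite linearD /=; ring.
have b2Z x y t : b2 x (t *: y) = t * b2 x y.
  rewrite /b2 mulr_sumr; apply: eq_bigr => i _.
  rewrite wZ linearZ /=; ring.
have Q2Z a x : Q2 (a *: x) = a ^+ 2 * Q2 x.
  rewrite /Q2 mulr_sumr; apply: eq_bigr => i _.
  rewrite wZ linearZ /=; ring.
have Q2eq0 x : Q2 x = 0 -> w x = 0.
  move=> /psumr_eq0P H.
  rewrite (coord_vbasis (memvf (w x))) big1 // => i _.
  have := H (fun j _ => sqr_ge0 _) i isT; move/eqP; rewrite sqrf_eq0 => /eqP ->.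
  by rewrite scale0r.
exists (fun x => Num.sqrt (Q1 x + Q2 x)); split.
  apply: (@norm_of_form _ _ _ (fun x y => b1 x y + b2 x y)).
  - by move=> x; rewrite addr_ge0.
  - move=> x Hx.
    have h1 : Q1 x = 0 by move: (Q1ge x) (Q2ge x); lra.
    have h2 : Q2 x = 0 by move: (Q1ge x) (Q2ge x); lra.
    have := Q2eq0 _ h2; rewrite /w => /eqP; rewrite subr_eq0 => /eqP ->.
    by have [_ _] := nreal _ (memv_proj M x); apply.
  - by move=> a x; rewrite Q1Z Q2Z mulrDr.
  - move=> x y; rewrite Q1D Q2D; ring.
  - by move=> x y t; rewrite b1Z b2Z mulrDr.
move=> x xM.
have px : p x = x by rewrite /p projv_id.
have wx : w x = 0 by rewrite /w px subrr.
have Q20 : Q2 x = 0 by rewrite /Q2 wx big1 // => i _; rewrite linear0 expr0n.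
rewrite sqr_sqrtr ?addr_ge0 // Q20 addr0 /Q1 px.
by have [] := nreal _ xM.
Qed.
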